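(* There is $d_0$ such that the following holds for all $d\geq d_0$. Let $G$ be a graph on $n$ vertices with average degree $d$. Then there exists a non-empty bipartite subgraph $G''$ of $G$ with parts $X$ and $Y$ such that $d_{G''}(x)\geq\frac{\Delta(G'')}{160}$ for every $x\in X$, and $d_{G''}(y)\geq\frac{d}{20\log n}$ for every $y\in Y$.
   Context: $d_{G''}(v)$ is the degree of $v$ in $G''$ and $\Delta(G'')$ the maximum degree of $G''$. Logarithms are base $2$. *)

(* Defs.v *)
From mathcomp Require Import all_boot.
From Stdlib Require Import Reals.
Set Implicit Arguments. Unset Strict Implicit. Unset Printing Implicit Defensive.

(* A (simple) graph on a finite vertex type T is a relation e : rel T,
   required to be symmetric and irreflexive where used. *)

Definition deg (T : finType) (e : rel T) (v : T) : nat := #|[set u | e v u]|.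

Definition maxdeg (T : finType) (e : rel T) (V : {set T}) : nat :=
  \max_(v in V) deg e v.

Definition avgdeg (T : finType) (e : rel T) : R :=
  Rdiv (INR (\sum_(v : T) deg e v)) (INR #|T|).

Definition log2 (x : R) : R := Rdiv (ln x) (ln 2).

(* Main.v *)
Require Import Defs.
From mathcomp Require Import all_boot.
From mathcomp Require Import zify.
From Stdlib Require Import Reals Lra Classical.
From mathcomp Require Import all_boot.
From mathcomp Require Import zify.
Set Implicit Arguments. Unset Strict Implicit. Unset Printing Implicit Defensive.
Set Warnings "-notation-overridden".

Definition restr (T : finType) (g : rel T) (U : {set T}) : rel T :=
  fun x y => [&& g x y, x \in U & y \in U].
Definition E (T : finType) (h : rel T) : nat := \sum_v deg h v.

Lemma degE (T : finType) (h : rel T) v : deg h v = \sum_u (h v u : nat).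
Proof.
rewrite /deg -sum1dep_card big_mkcond /=; apply: eq_bigr => u _.
by case: (h v u).
Qed.

Lemma sum_symm (T : finType) (h : rel T) w : symmetric h ->
  \sum_a (h a w : nat) = deg h w.
Proof. by move=> hs; rewrite degE; apply: eq_bigr => a _; rewrite hs. Qed.

Lemma sum_eqmul (T : finType) (F : T -> nat) w : \sum_a (a == w) * F a = F w.
Proof.
by rewrite (bigD1 w) //= eqxx mul1n big1 ?addn0 // => a /negbTE ->.
Qed.

Lemma E_remove (T : finType) (g : rel T) (U : {set T}) w :
  symmetric g -> irreflexive g ->
  E (restr g U) = E (restr g (U :\ w)) + 2 * deg (restr g U) w.
Proof.
move=> gs gi.
have key : forall a b, (restr g U a b : nat) =
   restr g (U :\ w) a b + ((a == w) + (b == w)) * restr g U a b.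
  move=> a b; rewrite /restr !inE.
  have gab : (a == w) && (b == w) -> g a b = false.
    by case/andP=> /eqP -> /eqP ->; apply: gi.
  move: gab; case: (a == w); case: (b == w); case: (g a b);
   case: (a \in U); case: (b \in U); simpl. all: try (move=> H; by have := H isT). all: try (move=> _; done).
have rs : symmetric (restr g U).
  by move=> a b; rewrite /restr gs; case: (a \in U); case: (b \in U); rewrite ?andbF.
rewrite /E.
under eq_bigr => a _ do rewrite degE.
under [X in _ = X + _]eq_bigr => a _ do rewrite degE.
rewrite (eq_bigr (fun a => \sum_b (restr g (U :\ w) a b + ((a == w) + (b == w)) * restr g U a b))); last first.
  move=> a _; apply: eq_bigr => b _; exact: key.
rewrite (eq_bigr (fun a => \sum_b restr g (U :\ w) a b + \sum_b ((a == w) + (b == w)) * restr g U a b)); last first.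
  by move=> a _; rewrite big_split.
rewrite big_split /=; congr (_ + _).
rewrite (eq_bigr (fun a => (a == w) * deg (restr g U) a + \sum_b (b == w) * restr g U a b)); last first.
  move=> a _; rewrite degE big_distrr /= -big_split /=; apply: eq_bigr => b _.
  by rewrite mulnDl.
rewrite big_split /= sum_eqmul.
under eq_bigr => a _ do rewrite sum_eqmul.
by rewrite sum_symm // mul2n addnn.
Qed.

Lemma deletion (T : finType) (g : rel T) (M : nat) (t : T -> nat) :
  symmetric g -> irreflexive g ->
  forall U : {set T}, 2 * \sum_(v in U) t v < M * E (restr g U) ->
  exists U' : {set T}, U' \subset U /\ 0 < E (restr g U') /\
    forall v, v \in U' -> t v <= M * deg (restr g U') v.
Proof.
move=> gs gi U; move: {2}#|U| (leqnn #|U|) => n.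
elim: n U => [|n IH] U hU hE;
  (case: (boolP [exists w in U, M * deg (restr g U) w < t w]) => [/existsP[w /andP[wU hw]]|hgood];
  [ | exists U; split; first exact: subxx; split;
      [ by move: hE; case: (E _) => //; rewrite muln0
      | move=> v vU; move/existsPn: hgood => /(_ v); rewrite vU /= -leqNgt //]]).
- by move: hU; rewrite leqn0 => /eqP/cards0_eq => U0; rewrite U0 inE in wU.
- have hU' : #|U :\ w| <= n by move: hU; rewrite (cardsD1 w U) wU.
  have hE' : 2 * \sum_(v in U :\ w) t v < M * E (restr g (U :\ w)).
    move: hE; rewrite (big_setD1 w wU) /= (@E_remove _ g U w gs gi).
    move: hw; set a := \sum_(v in U :\ w) t v; set b := E _; set c := deg _ _.
    move=> hw hE; nia.
  have [U' [sU' [pos hU'']]] := IH _ hU' hE'.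
  exists U'; split => //; apply: subset_trans sU' _; exact: subD1set.
Qed.

Lemma sum_inc (T : finType) (h : rel T) v : symmetric h ->
  \sum_a \sum_b ((a == v) + (b == v)) * h a b = 2 * deg h v.
Proof.
move=> hs.
rewrite (eq_bigr (fun a => (a == v) * deg h a + \sum_b (b == v) * h a b)); last first.
  move=> a _; rewrite degE big_distrr /= -big_split /=; apply: eq_bigr => b _.
  by rewrite mulnDl.
rewrite big_split /= sum_eqmul.
under eq_bigr => a _ do rewrite sum_eqmul.
by rewrite sum_symm // mul2n addnn.
Qed.

Definition cross (T : finType) (e : rel T) (S : {set T}) : rel T :=
  fun x y => e x y && ((x \in S) != (y \in S)).
Definition same (T : finType) (e : rel T) (S : {set T}) : rel T :=
  fun x y => e x y && ((x \in S) == (y \in S)).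

Lemma maxcut (T : finType) (e : rel T) : symmetric e -> irreflexive e ->
  exists S : {set T}, forall v, deg e v <= 2 * deg (cross e S) v.
Proof.
move=> es ei.
case: (@arg_maxnP _ (set0 : {set T}) xpredT (fun S => E (cross e S)) isT) => S _ Smax.
exists S => v; rewrite leqNgt; apply/negP => hv.
pose S' := [set u | (u \in S) != (u == v)].
have key : forall a b, (cross e S' a b : nat) + ((a == v) + (b == v)) * cross e S a b
    = cross e S a b + ((a == v) + (b == v)) * same e S a b.
  move=> a b; rewrite /cross /same /S' !inE.
  have gab : (a == v) && (b == v) -> e a b = false.
    by case/andP=> /eqP -> /eqP ->; apply: ei.
  move: gab; case: (a == v); case: (b == v); case: (e a b);
   case: (a \in S); case: (b \in S); simpl. all: try (move=> H; by have := H isT). all: try (move=> _; done).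
have cs : symmetric (cross e S).
  by move=> a b; rewrite /cross es; case: (a \in S); case: (b \in S).
have ss : symmetric (same e S).
  by move=> a b; rewrite /same es; case: (a \in S); case: (b \in S).
have sum_eq : E (cross e S') + 2 * deg (cross e S) v = E (cross e S) + 2 * deg (same e S) v.
  rewrite -(sum_inc v cs) -(sum_inc v ss) /E.
  under eq_bigr => a _ do rewrite degE.
  under [in RHS]eq_bigr => a _ do rewrite degE.
  rewrite -!big_split /=; apply: eq_bigr => a _; rewrite -!big_split /=.
  by apply: eq_bigr => b _; exact: key.
have degsplit : deg e v = deg (cross e S) v + deg (same e S) v.
  rewrite !degE -big_split /=; apply: eq_bigr => b _; rewrite /cross /same.
  by case: (e v b); case: (v \in S); case: (b \in S).
have := Smax S' isT; move: sum_eq hv; rewrite degsplit; lia.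
Qed.

Lemma sum_ord_eq1 (K x : nat) (a : nat -> nat) : x < K ->
  \sum_(k < K) (x == k) * a k = a x.
Proof.
move=> hx; rewrite (bigD1 (Ordinal hx)) //= eqxx mul1n big1 ?addn0 //.
move=> k hk; case: (eqVneq x k) => [hxk|]; last by rewrite mul0n.
by move: hk; rewrite -(inj_eq val_inj) /= hxk eqxx.
Qed.

Lemma sum_ord_le (K x : nat) (a : nat -> nat) :
  \sum_(k < K) (x == k) * a k <= a x.
Proof.
case: (ltnP x K) => hx; first by rewrite sum_ord_eq1.
rewrite big1 // => k _; case: (eqVneq x k) => [hxk|]; last by rewrite mul0n.
by move: (ltn_ord k); rewrite -hxk ltnNge hx.
Qed.

Lemma up_log_le2 m : 0 < m -> 2 ^ up_log 2 m <= 2 * m.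
Proof.
case: m => [//|[|m]] _; first by rewrite up_log1.
have h := @up_log_gtn 2 m.+2 isT isT.
have hp : 0 < up_log 2 m.+2 by rewrite up_log_gt0.
rewrite -(prednK hp) expnS leq_mul2l /=; exact: ltnW.
Qed.

Definition lev (T : finType) (e : rel T) (S : {set T}) (v : T) : nat :=
  up_log 2 (deg (cross e S) v).
Definition top (T : finType) (e : rel T) (S : {set T}) (a b : T) : T :=
  if (lev e S b < lev e S a) || ((lev e S b == lev e S a) && (a \in S)) then a else b.
Definition gk (T : finType) (e : rel T) (S : {set T}) (bb : bool) (k : nat) : rel T :=
  fun x y => [&& cross e S x y, (top e S x y \in S) == bb & lev e S (top e S x y) == k].
Definition Xk (T : finType) (e : rel T) (S : {set T}) (bb : bool) (k : nat) : {set T} :=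
  [set v | [&& (v \in S) == bb, lev e S v == k & 0 < deg (cross e S) v]].

Lemma cross_sym (T : finType) (e : rel T) S : symmetric e -> symmetric (cross e S).
Proof. by move=> es a b; rewrite /cross es; case: (a \in S); case: (b \in S). Qed.

Lemma top_sym (T : finType) (e : rel T) S a b : cross e S a b -> top e S a b = top e S b a.
Proof.
rewrite /cross /top => /andP[_ hab].
case: (ltngtP (lev e S b) (lev e S a)) => h //=.
move: hab; by case: (a \in S); case: (b \in S).
Qed.

Lemma top_in (T : finType) (e : rel T) S a b : (top e S a b == a) || (top e S a b == b).
Proof. by rewrite /top; case: ifP; rewrite eqxx ?orbT. Qed.

Lemma top_lev (T : finType) (e : rel T) S a b :
  (lev e S a <= lev e S (top e S a b)) && (lev e S b <= lev e S (top e S a b)).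
Proof.
rewrite /top; case: ifP => [/orP[h|/andP[/eqP -> _]]|].
- by rewrite leqnn ltnW.
- by rewrite leqnn.
- by move/negbT; rewrite negb_or -leqNgt => /andP[-> _]; rewrite leqnn.
Qed.

Lemma cross_deg_pos (T : finType) (e : rel T) S a b : cross e S a b -> 0 < deg (cross e S) a.
Proof. by move=> h; rewrite /deg card_gt0; apply/set0Pn; exists b; rewrite inE. Qed.

Lemma gk_sym (T : finType) (e : rel T) S bb k : symmetric e -> symmetric (gk e S bb k).
Proof.
move=> es x y; rewrite /gk (cross_sym S es x y); case h: (cross e S y x) => //=.
by rewrite (top_sym h).
Qed.

Lemma gk_sub (T : finType) (e : rel T) S bb k x y : gk e S bb k x y -> e x y.
Proof. by case/and3P=> /andP[]. Qed.

Lemma gk_lev (T : finType) (e : rel T) S bb k x y : gk e S bb k x y -> lev e S x <= k.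
Proof.
case/and3P=> _ _ /eqP <-; by case/andP: (top_lev e S x y).
Qed.

Lemma gk_bip (T : finType) (e : rel T) S bb k x y : symmetric e -> gk e S bb k x y ->
  (x \in Xk e S bb k) && (y \notin Xk e S bb k) || (x \notin Xk e S bb k) && (y \in Xk e S bb k).
Proof.
move=> es h; have hc : cross e S x y by case/and3P: h.
have hc' : cross e S y x by rewrite (cross_sym S es).
move: (h); case/and3P=> _ hb hl.
have px := cross_deg_pos hc; have py := cross_deg_pos hc'.
move/andP: (hc) => [_ hxy].
rewrite !inE px py !andbT.
case/orP: (top_in e S x y) => /eqP ht; rewrite ht in hb hl; rewrite hb hl /=.
- have -> : ((y \in S) == bb) = false.
    by move/eqP: hb => <-; move: hxy; case: (x \in S); case: (y \in S).
  by [].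
- have -> : ((x \in S) == bb) = false.
    by move/eqP: hb => <-; move: hxy; case: (x \in S); case: (y \in S).
  by [].
Qed.

Lemma deg_sub (T : finType) (h h' : rel T) v : (forall u, h v u -> h' v u) -> deg h v <= deg h' v.
Proof. by move=> H; apply: subset_leq_card; apply/subsetP => u; rewrite !inE; apply: H. Qed.

Lemma deg_le_pow (T : finType) (e : rel T) S x k : lev e S x <= k -> deg (cross e S) x <= 2 ^ k.
Proof.
move=> h; apply: (leq_trans (@up_logP 2 _ isT)); by rewrite leq_exp2l.
Qed.

Lemma count_deg (T : finType) (e : rel T) S K w : (forall v, lev e S v <= K) ->
  deg (cross e S) w = \sum_(bb : bool) \sum_(k < K.+1) deg (gk e S bb k) w.
Proof.
move=> hK.
under eq_bigr => bb _ do under eq_bigr => k _ do rewrite degE.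
under eq_bigr => bb _ do rewrite exchange_big /=.
rewrite exchange_big /= degE; apply: eq_bigr => u _.
rewrite /gk; case: (cross e S w u) => /=; last first.
  by rewrite big1 // => bb _; rewrite big1.
set t := top e S w u.
have ht : lev e S t < K.+1 by rewrite ltnS hK.
rewrite big_bool /=.
rewrite (eq_bigr (fun k : 'I_K.+1 => ((t \in S) == true) * ((lev e S t == k) * 1))); last first.
  by move=> k _; rewrite muln1; case: (_ == true); case: (_ == _).
rewrite -big_distrr /= (@sum_ord_eq1 K.+1 (lev e S t) (fun=> 1)) //.
rewrite (eq_bigr (fun k : 'I_K.+1 => ((t \in S) == false) * ((lev e S t == k) * 1))); last first.
  by move=> k _; rewrite muln1; case: (_ == false); case: (_ == _).
rewrite -big_distrr /= (@sum_ord_eq1 K.+1 (lev e S t) (fun=> 1)) //.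
by case: (t \in S).
Qed.

Lemma count_X (T : finType) (e : rel T) S K v :
  \sum_(bb : bool) \sum_(k < K.+1) (v \in Xk e S bb k) * 2 ^ k <= 2 * deg (cross e S) v.
Proof.
case: (posnP (deg (cross e S) v)) => hd.
  rewrite big1 // => bb _; rewrite big1 // => k _; by rewrite /Xk inE hd !andbF.
rewrite big_bool /=.
rewrite [X in X + _](eq_bigr (fun k : 'I_K.+1 => ((v \in S) == true) * ((lev e S v == k) * 2 ^ k))); last first.
  by move=> k _; rewrite /Xk inE hd andbT; case: (_ == true); case: (_ == _); rewrite ?mul0n ?mul1n.
rewrite [X in _ + X](eq_bigr (fun k : 'I_K.+1 => ((v \in S) == false) * ((lev e S v == k) * 2 ^ k))); last first.
  by move=> k _; rewrite /Xk inE hd andbT; case: (_ == false); case: (_ == _); rewrite ?mul0n ?mul1n.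
rewrite -!big_distrr /=.
have h1 := sum_ord_le K.+1 (lev e S v) (fun k => 2 ^ k).
have h2 := up_log_le2 hd.
rewrite /lev in h1 h2 *.
case: (v \in S) => /=; rewrite ?mul1n ?mul0n ?addn0 ?add0n; exact: leq_trans h1 h2.
Qed.

Definition tk (T : finType) (e : rel T) S (N tY : nat) bb k (v : T) : nat :=
  if v \in Xk e S bb k then N * 2 ^ k else tY.

Lemma sum_bound (T : finType) (e : rel T) S K N tY : (forall v, lev e S v <= K) ->
  (forall bb (k : 'I_K.+1), 160 * N * E (gk e S bb k) <= 2 * \sum_v tk e S N tY bb k v) ->
  39 * N * E (cross e S) <= K.+1 * #|T| * tY.
Proof.
move=> hK H.
have h1 : E (cross e S) = \sum_(bb : bool) \sum_(k < K.+1) E (gk e S bb k).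
  rewrite /E; under eq_bigr => v _ do rewrite (@count_deg _ e S K v hK).
  rewrite exchange_big /=; apply: eq_bigr => bb _.
  by rewrite exchange_big.
have h2 : 160 * N * E (cross e S) <=
   \sum_(bb : bool) \sum_(k < K.+1) 2 * \sum_v tk e S N tY bb k v.
  rewrite h1 big_distrr /=; apply: leq_sum => bb _.
  rewrite big_distrr /=; apply: leq_sum => k _; exact: H.
have h3 : forall v, \sum_(bb : bool) \sum_(k < K.+1) tk e S N tY bb k v <=
     2 * N * deg (cross e S) v + 2 * K.+1 * tY.
  move=> v.
  apply: (@leq_trans (\sum_(bb : bool) \sum_(k < K.+1) (N * ((v \in Xk e S bb k) * 2 ^ k) + tY))).
    apply: leq_sum => bb _; apply: leq_sum => k _; rewrite /tk.
    by case: (v \in Xk e S bb k); rewrite ?mul1n ?mul0n ?muln0 ?leq_addr ?leq_addl.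
  under eq_bigr => bb _ do rewrite big_split /= -big_distrr /=.
  rewrite big_split /= -big_distrr /= !big_bool /= !sum_nat_const !card_ord.
  have := @count_X _ e S K v; rewrite big_bool /= => hX.
  rewrite -mulnA; nia.
have h4 : \sum_(bb : bool) \sum_(k < K.+1) 2 * \sum_v tk e S N tY bb k v
     = 2 * \sum_v \sum_(bb : bool) \sum_(k < K.+1) tk e S N tY bb k v.
  transitivity (2 * \sum_(bb : bool) \sum_(k < K.+1) \sum_v tk e S N tY bb k v).
    rewrite big_distrr /=; apply: eq_bigr => bb _; by rewrite big_distrr.
  congr (2 * _); rewrite [RHS]exchange_big /=; apply: eq_bigr => bb _.
  by rewrite exchange_big.
have h5 : \sum_v \sum_(bb : bool) \sum_(k < K.+1) tk e S N tY bb k v <=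
   \sum_v (2 * N * deg (cross e S) v + 2 * K.+1 * tY).
  by apply: leq_sum => v _; exact: h3.
move: h5; rewrite big_split /= -!big_distrr /= sum_nat_const -/(E (cross e S)).
move: h2; rewrite h4.
set D0 := E _; set s := \sum_v _.
rewrite (_ : #|xpredT| = #|T|) //; nia.
Qed.

Lemma restr_sym (T : finType) (g : rel T) U : symmetric g -> symmetric (restr g U).
Proof. by move=> gs a b; rewrite /restr gs; case: (a \in U); case: (b \in U); rewrite ?andbF. Qed.

Lemma good_case (T : finType) (e : rel T) S N tY bb k :
  symmetric e -> irreflexive e -> 0 < N ->
  2 * \sum_v tk e S N tY bb k v < 160 * N * E (gk e S bb k) ->
  exists (X Y : {set T}) (f : rel T),
      [disjoint X & Y] /\
      symmetric f /\
      (forall x y, f x y -> e x y) /\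
      (forall x y, f x y -> (x \in X /\ y \in Y) \/ (x \in Y /\ y \in X)) /\
      (exists x y, f x y) /\
      maxdeg f (X :|: Y) <= 2 ^ k /\
      (forall x, x \in X -> 2 ^ k <= 160 * deg f x) /\
      (forall y, y \in Y -> tY <= 160 * N * deg f y).
Proof.
move=> es ei hN H.
set g := gk e S bb k.
have gs : symmetric g := gk_sym S bb k es.
have gi : irreflexive g by move=> x; apply/negP => /gk_sub; rewrite ei.
have H' : 2 * \sum_(v in [set: T]) tk e S N tY bb k v < 160 * N * E (restr g [set: T]).
  have -> : E (restr g [set: T]) = E g.
    rewrite /E; apply: eq_bigr => v _; rewrite !degE; apply: eq_bigr => u _.
    by rewrite /restr !in_setT !andbT.
  by rewrite (eq_bigl xpredT) // => v; rewrite in_setT.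
have [U [_ [hpos hU]]] := deletion gs gi H'.
set X := Xk e S bb k.
exists (U :&: X), (U :\: X), (restr g U).
have fsub : forall x y, restr g U x y -> [&& g x y, x \in U & y \in U] by [].
split.
  rewrite disjoint_subset; apply/subsetP => x; rewrite !inE => /andP[_ ->]. done.
split; first exact: restr_sym.
split; first by move=> x y /and3P[/gk_sub].
split.
  move=> x y /and3P[hg hx hy]; rewrite !in_setI !in_setD hx hy /X /=.
  case/orP: (gk_bip es hg) => /andP[h1 h2]; rewrite h1 h2; [left|right]; done.
split.
  case: (boolP [exists x, exists y, restr g U x y]) => [/existsP[x /existsP[y h]]|hn].
    by exists x, y.
  move: hpos; rewrite /E big1 // => v _; rewrite degE big1 // => u _.
  move/existsPn: hn => /(_ v) /existsPn /(_ u); by case: (restr g U v u).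
split.
  apply/bigmax_leqP => v _.
  case: (posnP (deg (restr g U) v)) => [->//|hp].
  move: hp; rewrite /deg card_gt0 => /set0Pn[u]; rewrite inE => /and3P[hg _ _].
  have hl := gk_lev hg.
  apply: leq_trans (deg_le_pow hl).
  apply: (@leq_trans (deg g v)); apply: deg_sub => w; first by case/and3P.
  by case/and3P.
split.
  move=> x; rewrite inE => /andP[xU xX]; have := hU x xU; rewrite /tk xX.
  by rewrite -mulnA mulnCA leq_pmul2l.
move=> y; rewrite inE => /andP[yX yU]; have := hU y yU; rewrite /tk (negbTE yX).
by [].
Qed.

Local Open Scope R_scope.
Lemma real_contra (nR d L K tY D0 : R) : (
 1 <= nR -> 16 <= d -> 4 <= L -> L <= nR -> 0 <= K -> K + 1 <= L + 2 -> 0 <= tY ->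
 tY <= 160 * nR * (d / (20 * L)) + 1 ->
 d * nR <= 2 * D0 -> 39 * nR * D0 <= (K+1) * nR * tY -> False).
Proof.
intros hn hd hL hLn hK hKL htY htY2 hD hmain.
assert (h1 : 39 * D0 <= (K+1) * tY).
{ apply (Rmult_le_reg_l nR); [lra|]. replace (nR * (39 * D0)) with (39 * nR * D0) by ring.
  replace (nR * ((K+1)*tY)) with ((K+1) * nR * tY) by ring. exact hmain. }
assert (h2 : (K+1) * tY <= (L+2) * tY) by (apply Rmult_le_compat_r; lra).
assert (h3 : 160 * nR * (d / (20 * L)) = 8 * (nR * d) / L) by (field; lra).
rewrite h3 in htY2.
assert (h4 : (L+2) * tY <= (L+2) * (8 * (nR * d) / L + 1)) by (apply Rmult_le_compat_l; lra).
assert (h5 : (L+2) * (8 * (nR * d) / L + 1) = 8 * (nR * d) + 16 * (nR * d) / L + L + 2) by (field; lra).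
assert (hP : 16 * nR <= nR * d) by nra.
assert (h6 : 16 * (nR * d) / L <= 4 * (nR * d)).
{ unfold Rdiv. apply (Rmult_le_reg_l L); [lra|].
  replace (L * (16 * (nR * d) * / L)) with (16 * (nR * d)) by (field; lra). nra. }
lra.
Qed.

Lemma ln_le' (x y : R) : (0 < x)%R -> (x <= y)%R -> (ln x <= ln y)%R.
Proof.
intros hx hxy; destruct (Rle_lt_or_eq_dec _ _ hxy) as [h|h].
- left; apply ln_increasing; auto.
- rewrite h; right; reflexivity.
Qed.

Lemma ln2_pos : (0 < ln 2)%R.
Proof. rewrite <- ln_1; apply ln_increasing; lra. Qed.

Lemma INR_leq (a b : nat) : (a <= b)%N -> (INR a <= INR b)%R.
Proof. by move/leP; apply: le_INR. Qed.

Lemma INR_mul (a b : nat) : INR (a * b)%N = Rmult (INR a) (INR b).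
Proof. by rewrite -multE mult_INR. Qed.

Lemma INR_add (a b : nat) : INR (a + b)%N = Rplus (INR a) (INR b).
Proof. by rewrite -plusE plus_INR. Qed.
Lemma INR_exp2 (m : nat) : INR (2 ^ m)%N = pow 2 m.
Proof.
elim: m => [|m IH]; first by rewrite expn0 /=.
by rewrite expnS INR_mul IH /= ; ring.
Qed.
Local Close Scope R_scope.

From Stdlib Require Import ZArith.
From mathcomp Require Import all_boot.
Set Warnings "-notation-overridden".

Theorem lemma4p3 :
  exists d0 : R, forall d : R, Rle d0 d ->
  forall (T : finType) (e : rel T),
    symmetric e -> irreflexive e -> (0 < #|T|)%N ->
    avgdeg e = d ->
    exists (X Y : {set T}) (f : rel T),
      [disjoint X & Y] /\
      symmetric f /\
      (forall x y, f x y -> e x y) /\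
      (forall x y, f x y -> (x \in X /\ y \in Y) \/ (x \in Y /\ y \in X)) /\
      (exists x y, f x y) /\
      (forall x, x \in X ->
         Rle (Rdiv (INR (maxdeg f (X :|: Y))) 160) (INR (deg f x))) /\
      (forall y, y \in Y ->
         Rle (Rdiv d (Rmult 20 (log2 (INR #|T|)))) (INR (deg f y))).
Proof.
Local Open Scope R_scope.
exists 16 => d hd T e es ei hn hav.
set n := #|T|.
Local Close Scope R_scope.
have [S hS] := maxcut es ei.
set D := (\sum_v deg e v)%N.
have hD0 : (D <= 2 * E (cross e S))%N.
  by rewrite /D /E big_distrr /=; apply: leq_sum => v _; exact: hS.
set K := up_log 2 n.
have degn : forall (h : rel T) v, (deg h v <= n)%N by move=> h v; exact: max_card.
have hK : forall v, (lev e S v <= K)%N by move=> v; apply: leq_up_log.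
have hDn : (D <= n * n)%N.
  rewrite /D; apply: (@leq_trans (\sum_(v : T) n)); first by apply: leq_sum => v _.
  by rewrite sum_nat_const.
Local Open Scope R_scope.
have nR0 : 0 < INR n by apply: lt_0_INR; apply/ltP.
have hdef : d = INR D / INR n by rewrite -hav.
have hn16 : 16 <= INR n.
  have : INR D <= INR n * INR n by rewrite -INR_mul; apply: INR_leq.
  move=> h; apply: (Rle_trans _ d) => //.
  rewrite hdef; apply (Rmult_le_reg_l (INR n)) => //.
  by rewrite /Rdiv -Rmult_assoc (Rmult_comm (INR n) (INR D)) Rmult_assoc Rinv_r ?Rmult_1_r; lra.
have n16 : (16 <= n)%N.
  apply/leP; apply: INR_le; rewrite INR_IZR_INZ /=; lra.
have n1 : (1 < n)%N by apply: leq_trans n16.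
set L := log2 (INR n).
have l2 := ln2_pos.
have hL4 : 4 <= L.
  rewrite /L /log2; apply (Rmult_le_reg_r (ln 2)) => //.
  rewrite /Rdiv Rmult_assoc Rinv_l; last by lra.
  rewrite Rmult_1_r.
  have -> : 4 * ln 2 = ln (2 ^ 4) by rewrite ln_pow; [rewrite INR_IZR_INZ /=; ring | lra].
  apply: ln_le'; first by apply: pow_lt; lra.
  by rewrite /pow; lra.
have hK0 : (0 < K)%N by rewrite /K up_log_gt0 n1.
have hKL : INR K + 1 <= L + 2.
  have h := @up_log_gtn 2 n isT n1.
  have h' : INR (2 ^ K.-1) < INR n by apply: lt_INR; apply/ltP.
  rewrite INR_exp2 in h'.
  have h2 : ln (2 ^ K.-1) < ln (INR n).
    apply: ln_increasing => //; apply: pow_lt; rewrite /=; lra.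
  rewrite ln_pow in h2; last by rewrite /=; lra.
  have hKe : INR K = INR K.-1 + 1 by rewrite -S_INR prednK.
  have h3 : INR K.-1 < L.
    rewrite /L /log2; apply (Rmult_lt_reg_r (ln 2)) => //.
    rewrite /Rdiv Rmult_assoc Rinv_l; last by lra.
    by rewrite Rmult_1_r; move: h2; rewrite /= .
  lra.
have hLn : L <= INR n.
  have h := @up_logP 2 n isT.
  have hKn : (K <= n)%N by apply: up_log_min => //; apply: ltnW; apply: ltn_expl.
  apply: (Rle_trans _ (INR K)); last exact: INR_leq.
  have h' : INR n <= INR (2 ^ K) by apply: INR_leq.
  rewrite INR_exp2 in h'.
  have h2 : ln (INR n) <= ln (2 ^ K) by apply: ln_le'.
  rewrite ln_pow in h2; last by rewrite /=; lra.
  rewrite /L /log2; apply (Rmult_le_reg_r (ln 2)) => //.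
  rewrite /Rdiv Rmult_assoc Rinv_l; last by lra.
  by rewrite Rmult_1_r; move: h2; rewrite /= .
set q := d / (20 * L).
have q0 : 0 <= q.
  rewrite /q /Rdiv; apply: Rmult_le_pos; first lra.
  apply: Rlt_le; apply: Rinv_0_lt_compat; lra.
set x := 160 * INR n * q.
have x0 : 0 <= x by rewrite /x; apply: Rmult_le_pos => //; apply: Rmult_le_pos; lra.
have [hup1 hup2] := archimed x.
have z0 : (0 <= up x)%Z by apply: le_IZR; lra.
set tY := Z.to_nat (up x).
have htY : INR tY = IZR (up x) by rewrite INR_IZR_INZ Z2Nat.id.
case: (classic (exists (bb : bool) (k : 'I_K.+1),
   (2 * \sum_v tk e S n tY bb k v < 160 * n * E (gk e S bb k))%N)).
- move=> [bb [k hk]].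
  have n0 : (0 < n)%N by [].
  have [X [Y [f [h1 [h2 [h3 [h4 [h5 [h6 [h7 h8]]]]]]]]]] := @good_case T e S n tY bb k es ei n0 hk.
  exists X, Y, f; do 5 (split; first by []); split.
  + move=> y yX; have := leq_trans h6 (h7 y yX) => /INR_leq; rewrite INR_mul => hh.
    apply (Rmult_le_reg_r 160); first lra.
    rewrite /Rdiv Rmult_assoc Rinv_l ?Rmult_1_r; last lra.
    by move: hh; rewrite INR_IZR_INZ /=; lra.
  + move=> y yY; have := h8 y yY => /INR_leq; rewrite !INR_mul htY => hh.
    have e160 : INR 160 = 160 by rewrite INR_IZR_INZ.
    rewrite e160 in hh.
    have : 160 * INR n * q <= 160 * INR n * INR (deg f y) by rewrite -/x; lra.
    move=> hh2; apply: (Rmult_le_reg_l (160 * INR n)); first lra.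
    exact: hh2.
- move=> hno; exfalso.
  have hall : forall bb (k : 'I_K.+1), (160 * n * E (gk e S bb k) <= 2 * \sum_v tk e S n tY bb k v)%N.
    move=> bb k; rewrite leqNgt; apply/negP => hk; apply: hno; by exists bb, k.
  have hmain := sum_bound hK hall.
  apply: (@real_contra (INR n) d L (INR K) (INR tY) (INR (E (cross e S)))) => //.
  + lra.
  + exact: pos_INR.
  + exact: pos_INR.
  + rewrite htY -/q -/x; lra.
  + have := INR_leq hD0; rewrite INR_mul hdef => hh.
    have -> : INR D / INR n * INR n = INR D by field; lra.
    by move: hh; rewrite INR_IZR_INZ /=.
  + have e39 : INR 39 = 39 by rewrite INR_IZR_INZ.
    move: (INR_leq hmain); rewrite !INR_mul (S_INR K) e39 -/n; lra.
Qed.
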